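(* Let $x_1,x_2,x_3>0$, $\gamma,\delta>0$ with $\gamma\ne1\ne\delta$, and let $$\mathbf{Q}=\begin{pmatrix}1&\delta x_1&x_2&x_3\\ 1/(\delta x_1)&1&x_2/x_1&x_3/x_1\\ 1/x_2&x_1/x_2&1&\gamma x_3/x_2\\ 1/x_3&x_1/x_3&x_2/(\gamma x_3)&1\end{pmatrix}$$ with principal right eigenvector $\mathbf{w}^{EM}$. If $\delta<1$ and $\gamma>1$, then $w_2^{EM}/w_4^{EM}>x_3/x_1$.
   Context: The principal right eigenvector is the positive (Perron) eigenvector belonging to the largest eigenvalue. *)

(* Defs.v *)
From HB Require Import structures.
From mathcomp Require Import all_boot all_order all_algebra.
Set Implicit Arguments. Unset Strict Implicit. Unset Printing Implicit Defensive.
Import Order.TTheory GRing.Theory Num.Theory.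
Local Open Scope ring_scope.

(* Indices 0..3 correspond to the paper's 1..4. *)
Definition Qmat (R : realFieldType) (x1 x2 x3 gamma delta : R) : 'M[R]_4 :=
  \matrix_(i < 4, j < 4)
   match nat_of_ord i, nat_of_ord j with
   | 0, 0 => 1 | 0, 1 => delta * x1 | 0, 2 => x2 | 0, _ => x3
   | 1, 0 => (delta * x1)^-1 | 1, 1 => 1 | 1, 2 => x2 / x1 | 1, _ => x3 / x1
   | 2, 0 => x2^-1 | 2, 1 => x1 / x2 | 2, 2 => 1 | 2, _ => gamma * x3 / x2
   | _, 0 => x3^-1 | _, 1 => x1 / x3 | _, 2 => x2 / (gamma * x3) | _, _ => 1
   end.

Definition principal_right_eigenvector (R : realFieldType) (n : nat)
  (A : 'M[R]_n) (w : 'cV[R]_n) : Prop :=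
  (forall i, 0 < w i 0) /\
  exists lam : R, A *m w = lam *: w /\ eigenvalue A lam /\
    (forall mu : R, eigenvalue A mu -> mu <= lam).

(* Main.v *)
Require Import Defs.
From HB Require Import structures.
From mathcomp Require Import all_boot all_order all_algebra.
From mathcomp Require Import ring.
Import Order.TTheory GRing.Theory Num.Theory.
Local Open Scope ring_scope.

Lemma sum4 (R : realFieldType) (F : 'I_4 -> R) :
  \sum_(i < 4) F i = F 0 + F 1 + F 2 + F 3.
Proof.
rewrite !big_ord_recl big_ord0 addr0 !addrA.
by congr (_ + _ + _ + _); congr F; apply/val_inj.
Qed.

Theorem mainTheorem15 (R : realFieldType) (x1 x2 x3 gamma delta : R)
  (w : 'cV[R]_4) :
  0 < x1 -> 0 < x2 -> 0 < x3 -> 0 < gamma -> 0 < delta ->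
  gamma != 1 -> delta != 1 ->
  principal_right_eigenvector (Qmat x1 x2 x3 gamma delta) w ->
  delta < 1 -> 1 < gamma ->
  x3 / x1 < w 1 0 / w 3 0.
Proof.
move=> h1 h2 h3 hg hd _ _ [wpos [lam [Hw _]]] hd1 hg1.
have E := fun i => congr1 (fun M : 'cV[R]_4 => M i 0) Hw.
have e0 := E 0; have e1 := E 1; have e3 := E 3.
move: e0 e1 e3; rewrite /= !mxE !sum4 !mxE /=.
have pa := wpos 0; have pb := wpos 1; have pc := wpos 2; have pd := wpos 3.
move: pa pb pc pd.
set a := w 0 0; set b := w 1 0; set c := w 2 0; set d := w 3 0.
move=> pa pb pc pd e0 e1 e3.
have xn1 : x1 != 0 by rewrite gt_eqF.
have xn3 : x3 != 0 by rewrite gt_eqF.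
have dn : delta != 0 by rewrite gt_eqF.
have gn : gamma != 0 by rewrite gt_eqF.
have hlam : 0 < lam.
  have : 0 < lam * a by rewrite -e0; rewrite mul1r; do 3! (apply: addr_gt0 => //; try apply: mulr_gt0 => //; try apply: mulr_gt0 => //).
  by rewrite pmulr_lgt0.
have hid : 1 < delta^-1 by rewrite invf_gt1.
have hig : gamma^-1 < 1 by rewrite invf_lt1.
have e1' : lam * b * x1 = a * delta^-1 + b * x1 + x2 * c + x3 * d.
  by rewrite -e1; field; rewrite xn1 dn.
have e3' : lam * d * x3 = a + b * x1 + x2 * c * gamma^-1 + x3 * d.
  by rewrite -e3; field; rewrite xn3 gn.
have key : lam * (x1 * b - x3 * d) = a * (delta^-1 - 1) + x2 * c * (1 - gamma^-1).
  have -> : lam * (x1 * b - x3 * d) = lam * b * x1 - lam * d * x3 by ring.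
  rewrite e1' e3'; ring.
have pos : 0 < x1 * b - x3 * d.
  have : 0 < lam * (x1 * b - x3 * d).
    rewrite key; apply: addr_gt0; apply: mulr_gt0 => //; rewrite ?subr_gt0 //.
    exact: mulr_gt0.
  by rewrite pmulr_rgt0.
rewrite ltr_pdivrMr // mulrAC ltr_pdivlMr //.
by rewrite -subr_gt0 (mulrC b).
Qed.
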